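(* Let $(M,g)$ be a $5$-dimensional Einstein manifold. Then for all $i,j$, $$\Big(\frac{\tau^3}{25}+\frac{\tau}{5}|R|^2\Big)g_{ij}-2\tau R_{iabc}R_{jabc}-4\check{R}_{ij}-4\hat{R}_{ij}+8\mathring{R}_{ij}=0.$$
   Context: Conventions: $R(X,Y)Z=[\nabla_X,\nabla_Y]Z-\nabla_{[X,Y]}Z$ for the Levi-Civita connection; components w.r.t. a local orthonormal frame, $R_{abcd}=g(R(e_a,e_b)e_c,e_d)$, $\rho_{ij}=R_{aija}$, $\tau=\rho_{aa}$, summation over repeated indices. Einstein means $\rho_{ij}=\frac{\tau}{\dim M}g_{ij}$. Notation: $|R|^2=R_{abcd}R_{abcd}$, $\check R_{ij}=R_{iuvj}R_{abcu}R_{abcv}$, $\hat R_{ij}=R_{ibac}R_{jbuv}R_{acuv}$, $\mathring R_{ij}=R_{iabc}R_{jubv}R_{aucv}$. *)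

(* Defs.v *)
(* Pointwise (algebraic) model of the curvature tensor of a
   Riemannian manifold, written in a local orthonormal frame e_1..e_n,
   so g_ij = delta_ij. *)
From HB Require Import structures.
From mathcomp Require Import all_boot all_order all_algebra.
Set Implicit Arguments. Unset Strict Implicit. Unset Printing Implicit Defensive.
Import Order.TTheory GRing.Theory Num.Theory.
Local Open Scope ring_scope.

(* components R_abcd = g(R(e_a,e_b)e_c, e_d) *)
Definition curv (R : realFieldType) (n : nat) := 'I_n -> 'I_n -> 'I_n -> 'I_n -> R.

Definition gmet (R : realFieldType) (n : nat) (i j : 'I_n) : R := (i == j)%:R.

Definition is_curvature_tensor (R : realFieldType) (n : nat) (Rm : curv R n) : Prop :=
  [/\ (forall a b c d, Rm a b c d = - Rm b a c d),
      (forall a b c d, Rm a b c d = - Rm a b d c),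
      (forall a b c d, Rm a b c d = Rm c d a b)
    & (forall a b c d, Rm a b c d + Rm b c a d + Rm c a b d = 0)].

Definition ricci (R : realFieldType) (n : nat) (Rm : curv R n) (i j : 'I_n) : R :=
  \sum_(a < n) Rm a i j a.

Definition scal (R : realFieldType) (n : nat) (Rm : curv R n) : R :=
  \sum_(a < n) ricci Rm a a.

Definition is_einstein (R : realFieldType) (n : nat) (Rm : curv R n) : Prop :=
  forall i j, ricci Rm i j = scal Rm / n%:R * gmet R i j.

Definition normsq (R : realFieldType) (n : nat) (Rm : curv R n) : R :=
  \sum_(a < n) \sum_(b < n) \sum_(c < n) \sum_(d < n) Rm a b c d * Rm a b c d.

Definition RR (R : realFieldType) (n : nat) (Rm : curv R n) (i j : 'I_n) : R :=
  \sum_(a < n) \sum_(b < n) \sum_(c < n) Rm i a b c * Rm j a b c.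

Definition Rcheck (R : realFieldType) (n : nat) (Rm : curv R n) (i j : 'I_n) : R :=
  \sum_(u < n) \sum_(v < n) \sum_(a < n) \sum_(b < n) \sum_(c < n)
    Rm i u v j * Rm a b c u * Rm a b c v.

Definition Rhat (R : realFieldType) (n : nat) (Rm : curv R n) (i j : 'I_n) : R :=
  \sum_(a < n) \sum_(b < n) \sum_(c < n) \sum_(u < n) \sum_(v < n)
    Rm i b a c * Rm j b u v * Rm a c u v.

Definition Rring (R : realFieldType) (n : nat) (Rm : curv R n) (i j : 'I_n) : R :=
  \sum_(a < n) \sum_(b < n) \sum_(c < n) \sum_(u < n) \sum_(v < n)
    Rm i a b c * Rm j u b v * Rm a u c v.

(* Main.v *)
From Stdlib Require Import ZArith FunctionalExtensionality.
Require Import Defs.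
From HB Require Import structures.
From mathcomp Require Import all_boot all_order all_algebra ssrZ.
From mathcomp Require Import ring lra zify.
Set Implicit Arguments. Unset Strict Implicit. Unset Printing Implicit Defensive.
Import Order.TTheory GRing.Theory Num.Theory.
Local Open Scope ring_scope.

Definition zR {R : realFieldType} (z : Z) : R := (int_of_Z z)%:~R.
Arguments zR : simpl never.
Lemma zRD (R : realFieldType) a b : zR (Z.add a b) = zR a + zR b :> R.
Proof. by rewrite /zR rmorphD intrD. Qed.
Lemma zRM (R : realFieldType) a b : zR (Z.mul a b) = zR a * zR b :> R.
Proof. by rewrite /zR rmorphM intrM. Qed.
Lemma zRN (R : realFieldType) a : zR (Z.opp a) = - zR a :> R.
Proof. by rewrite /zR rmorphN intrN. Qed.
Lemma zR0 (R : realFieldType) : zR (0:Z) = 0 :> R. Proof. by []. Qed.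
Lemma zR1 (R : realFieldType) : zR (1:Z) = 1 :> R. Proof. by []. Qed.
Lemma zR2 (R : realFieldType) : zR (2:Z) = 2%:R :> R. Proof. by []. Qed.
Lemma zR3 (R : realFieldType) : zR (3:Z) = 3%:R :> R. Proof. by []. Qed.
Lemma zRm1 (R : realFieldType) : zR (-1:Z) = - 1 :> R. Proof. by []. Qed.
Lemma zRm2 (R : realFieldType) : zR (-2:Z) = - 2%:R :> R. Proof. by []. Qed.
Lemma zRm3 (R : realFieldType) : zR (-3:Z) = - 3%:R :> R. Proof. by []. Qed.
Definition zRE := (zR0, zR1, zR2, zR3, zRm1, zRm2, zRm3).

Definition lin := seq (Z * nat).
Definition evalL {R : realFieldType} (v : nat -> R) (l : lin) : R :=
  foldr (fun p acc => zR p.1 * v p.2 + acc) 0 l.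
Definition negL (l : lin) : lin := map (fun p => (Z.opp p.1, p.2)) l.
Lemma evalL_neg (R : realFieldType) (v : nat -> R) l : evalL v (negL l) = - evalL v l.
Proof. elim: l => [|p l IH] /=; first by rewrite oppr0. by rewrite IH zRN opprD mulNr. Qed.

Definition T3s (a b c d : nat) : lin :=
  match a, b, c, d with
  | 0, 1, 0, 1 => [:: ((1:Z), 1)]
  | 0, 1, 0, 2 => [:: ((1:Z), 2)]
  | 0, 1, 0, 3 => [:: ((1:Z), 3)]
  | 0, 1, 0, 4 => [:: ((1:Z), 4)]
  | 0, 1, 1, 2 => [:: ((1:Z), 5)]
  | 0, 1, 1, 3 => [:: ((1:Z), 6)]
  | 0, 1, 1, 4 => [:: ((1:Z), 7)]
  | 0, 1, 2, 3 => [:: ((1:Z), 8)]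
  | 0, 1, 2, 4 => [:: ((1:Z), 9)]
  | 0, 1, 3, 4 => [:: ((1:Z), 10)]
  | 0, 2, 0, 2 => [:: ((1:Z), 11)]
  | 0, 2, 0, 3 => [:: ((1:Z), 12)]
  | 0, 2, 0, 4 => [:: ((1:Z), 13)]
  | 0, 2, 1, 2 => [:: ((1:Z), 14)]
  | 0, 2, 1, 3 => [:: ((1:Z), 15)]
  | 0, 2, 1, 4 => [:: ((1:Z), 16)]
  | 0, 2, 2, 3 => [:: ((1:Z), 17)]
  | 0, 2, 2, 4 => [:: ((1:Z), 18)]
  | 0, 2, 3, 4 => [:: ((1:Z), 19)]
  | 0, 3, 0, 3 => [:: ((1:Z), 20)]
  | 0, 3, 0, 4 => [:: ((1:Z), 21)]
  | 0, 3, 1, 2 => [:: ((-1:Z), 8); ((1:Z), 15)]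
  | 0, 3, 1, 3 => [:: ((1:Z), 22)]
  | 0, 3, 1, 4 => [:: ((1:Z), 23)]
  | 0, 3, 2, 3 => [:: ((1:Z), 24)]
  | 0, 3, 2, 4 => [:: ((1:Z), 25)]
  | 0, 3, 3, 4 => [:: ((-1:Z), 7); ((-1:Z), 18)]
  | 0, 4, 0, 4 => [:: ((2:Z), 0); ((-1:Z), 1); ((-1:Z), 11); ((-1:Z), 20)]
  | 0, 4, 1, 2 => [:: ((-1:Z), 9); ((1:Z), 16)]
  | 0, 4, 1, 3 => [:: ((-1:Z), 10); ((1:Z), 23)]
  | 0, 4, 1, 4 => [:: ((-1:Z), 14); ((-1:Z), 22)]
  | 0, 4, 2, 3 => [:: ((-1:Z), 19); ((1:Z), 25)]
  | 0, 4, 2, 4 => [:: ((1:Z), 5); ((-1:Z), 24)]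
  | 0, 4, 3, 4 => [:: ((1:Z), 6); ((1:Z), 17)]
  | 1, 2, 1, 2 => [:: ((1:Z), 26)]
  | 1, 2, 1, 3 => [:: ((1:Z), 27)]
  | 1, 2, 1, 4 => [:: ((1:Z), 28)]
  | 1, 2, 2, 3 => [:: ((1:Z), 29)]
  | 1, 2, 2, 4 => [:: ((1:Z), 30)]
  | 1, 2, 3, 4 => [:: ((1:Z), 31)]
  | 1, 3, 1, 3 => [:: ((1:Z), 32)]
  | 1, 3, 1, 4 => [:: ((1:Z), 33)]
  | 1, 3, 2, 3 => [:: ((1:Z), 34)]
  | 1, 3, 2, 4 => [:: ((1:Z), 35)]
  | 1, 3, 3, 4 => [:: ((1:Z), 4); ((-1:Z), 30)]
  | 1, 4, 1, 4 => [:: ((2:Z), 0); ((-1:Z), 1); ((-1:Z), 26); ((-1:Z), 32)]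
  | 1, 4, 2, 3 => [:: ((-1:Z), 31); ((1:Z), 35)]
  | 1, 4, 2, 4 => [:: ((-1:Z), 2); ((-1:Z), 34)]
  | 1, 4, 3, 4 => [:: ((-1:Z), 3); ((1:Z), 29)]
  | 2, 3, 2, 3 => [:: ((3:Z), 0); ((-1:Z), 1); ((-1:Z), 11); ((-1:Z), 20); ((-1:Z), 26); ((-1:Z), 32)]
  | 2, 3, 2, 4 => [:: ((-1:Z), 21); ((-1:Z), 33)]
  | 2, 3, 3, 4 => [:: ((1:Z), 13); ((1:Z), 28)]
  | 2, 4, 2, 4 => [:: ((-1:Z), 0); ((1:Z), 1); ((1:Z), 20); ((1:Z), 32)]
  | 2, 4, 3, 4 => [:: ((-1:Z), 12); ((-1:Z), 27)]
  | 3, 4, 3, 4 => [:: ((-1:Z), 0); ((1:Z), 1); ((1:Z), 11); ((1:Z), 26)]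
  | _, _, _, _ => [::]
  end.

Definition atv {R : realFieldType} (X : nat -> nat -> nat -> nat -> R) (t : R) (k : nat) : R :=
  match k with
  | 0 => t
  | 1 => X 0 1 0 1
  | 2 => X 0 1 0 2
  | 3 => X 0 1 0 3
  | 4 => X 0 1 0 4
  | 5 => X 0 1 1 2
  | 6 => X 0 1 1 3
  | 7 => X 0 1 1 4
  | 8 => X 0 1 2 3
  | 9 => X 0 1 2 4
  | 10 => X 0 1 3 4
  | 11 => X 0 2 0 2
  | 12 => X 0 2 0 3
  | 13 => X 0 2 0 4
  | 14 => X 0 2 1 2
  | 15 => X 0 2 1 3
  | 16 => X 0 2 1 4
  | 17 => X 0 2 2 3
  | 18 => X 0 2 2 4
  | 19 => X 0 2 3 4
  | 20 => X 0 3 0 3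
  | 21 => X 0 3 0 4
  | 22 => X 0 3 1 3
  | 23 => X 0 3 1 4
  | 24 => X 0 3 2 3
  | 25 => X 0 3 2 4
  | 26 => X 1 2 1 2
  | 27 => X 1 2 1 3
  | 28 => X 1 2 1 4
  | 29 => X 1 2 2 3
  | 30 => X 1 2 2 4
  | 31 => X 1 2 3 4
  | 32 => X 1 3 1 3
  | 33 => X 1 3 1 4
  | 34 => X 1 3 2 3
  | 35 => X 1 3 2 4
  | _ => 0
  end.

Definition T2s (a b c d : nat) : lin :=
  if Nat.ltb a c || (Nat.eqb a c && Nat.leb b d) then T3s a b c d else T3s c d a b.
Definition T1s (a b c d : nat) : lin :=
  if Nat.eqb a b || Nat.eqb c d then [::] else
  if Nat.ltb a b then (if Nat.ltb c d then T2s a b c d else negL (T2s a b d c))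
  else (if Nat.ltb c d then negL (T2s b a c d) else T2s b a d c).

Definition ord5 (k : nat) : 'I_5 :=
  match k with 0 => @Ordinal 5 0 isT | 1 => @Ordinal 5 1 isT | 2 => @Ordinal 5 2 isT
  | 3 => @Ordinal 5 3 isT | _ => @Ordinal 5 4 isT end.
Lemma ord5_val (a : 'I_5) : ord5 a = a.
Proof. by case: a => [[|[|[|[|[|?]]]]] ?] //; apply: val_inj. Qed.

Definition r {R : realFieldType} (Rm : curv R 5) (a b c d : nat) : R :=
  Rm (ord5 a) (ord5 b) (ord5 c) (ord5 d).
Definition tt {R : realFieldType} (Rm : curv R 5) : R := - (scal Rm / 10%:R).

Definition sum5n {R : realFieldType} (f : nat -> R) := f 0%N + f 1%N + f 2%N + f 3%N + f 4%N.
Lemma sumE (R : realFieldType) (F : 'I_5 -> R) : \sum_(i < 5) F i = sum5n (fun k => F (ord5 k)).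
Proof.
rewrite !big_ord_recr big_ord0 /= add0r /sum5n.
by congr (_ + _ + _ + _ + _); congr F; apply: val_inj.
Qed.

Lemma ord5_eq (i j : nat) : (i < 5)%N -> (j < 5)%N -> (ord5 i == ord5 j) = (i == j).
Proof. by move: i j; do 2 (case=> [|[|[|[|[|?]]]]]). Qed.

Section S.
Variable (R : realFieldType) (Rm : curv R 5) (hR : is_curvature_tensor Rm) (hE : is_einstein Rm).
Lemma rA a b c d : r Rm a b c d = - r Rm b a c d.
Proof. by case: hR => h _ _ _; rewrite /r h. Qed.
Lemma rB a b c d : r Rm a b c d = - r Rm a b d c.
Proof. by case: hR => _ h _ _; rewrite /r h. Qed.
Lemma rS a b c d : r Rm a b c d = r Rm c d a b.
Proof. by case: hR => _ _ h _; rewrite /r h. Qed.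
Lemma r_aa a c d : r Rm a a c d = 0.
Proof. have := rA a a c d; lra. Qed.
Lemma r_cc a b c : r Rm a b c c = 0.
Proof. have := rB a b c c; lra. Qed.
Lemma rBian a b c d : r Rm a d b c = r Rm a c b d - r Rm a b c d.
Proof.
case: hR => _ _ _ h; have := h (ord5 a) (ord5 b) (ord5 c) (ord5 d).
rewrite -/(r Rm a b c d) -/(r Rm b c a d) -/(r Rm c a b d).
rewrite (rS b c a d) (rA c a b d); lra.
Qed.

Lemma einX i j : (i < 5)%N -> (j < 5)%N -> (i != j) ->
  r Rm 0 i 0 j + r Rm 1 i 1 j + r Rm 2 i 2 j + r Rm 3 i 3 j + r Rm 4 i 4 j = 0.
Proof.
move=> hi hj hij; have := hE (ord5 i) (ord5 j).
rewrite /ricci sumE /sum5n /gmet ord5_eq // (negbTE hij) mulr0.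
rewrite -/(r Rm 0 i j 0) -/(r Rm 1 i j 1) -/(r Rm 2 i j 2) -/(r Rm 3 i j 3) -/(r Rm 4 i j 4).
rewrite (rB 0 i j 0) (rB 1 i j 1) (rB 2 i j 2) (rB 3 i j 3) (rB 4 i j 4); lra.
Qed.

Lemma einK i : (i < 5)%N ->
  r Rm 0 i 0 i + r Rm 1 i 1 i + r Rm 2 i 2 i + r Rm 3 i 3 i + r Rm 4 i 4 i = 2%:R * tt Rm.
Proof.
move=> hi; have := hE (ord5 i) (ord5 i).
rewrite /ricci sumE /sum5n /gmet eqxx mulr1.
rewrite -/(r Rm 0 i i 0) -/(r Rm 1 i i 1) -/(r Rm 2 i i 2) -/(r Rm 3 i i 3) -/(r Rm 4 i i 4).
rewrite (rB 0 i i 0) (rB 1 i i 1) (rB 2 i i 2) (rB 3 i i 3) (rB 4 i i 4) /tt.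
have e : (2%:R * - (scal Rm / 10%:R) : R) = - (scal Rm / 5%:R).
  by field; rewrite ?pnatr_eq0.
rewrite e; lra.
Qed.

Ltac dispatch := match goal with
  | |- r _ 0%N 1%N 0%N 1%N = _ => by rewrite /= !zRE; ring
  | |- r _ 0%N 1%N 0%N 2%N = _ => by rewrite /= !zRE; ring
  | |- r _ 0%N 1%N 0%N 3%N = _ => by rewrite /= !zRE; ring
  | |- r _ 0%N 1%N 0%N 4%N = _ => by rewrite /= !zRE; ring
  | |- r _ 0%N 1%N 1%N 2%N = _ => by rewrite /= !zRE; ring
  | |- r _ 0%N 1%N 1%N 3%N = _ => by rewrite /= !zRE; ring
  | |- r _ 0%N 1%N 1%N 4%N = _ => by rewrite /= !zRE; ring
  | |- r _ 0%N 1%N 2%N 3%N = _ => by rewrite /= !zRE; ring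
  | |- r _ 0%N 1%N 2%N 4%N = _ => by rewrite /= !zRE; ring
  | |- r _ 0%N 1%N 3%N 4%N = _ => by rewrite /= !zRE; ring
  | |- r _ 0%N 2%N 0%N 2%N = _ => by rewrite /= !zRE; ring
  | |- r _ 0%N 2%N 0%N 3%N = _ => by rewrite /= !zRE; ring
  | |- r _ 0%N 2%N 0%N 4%N = _ => by rewrite /= !zRE; ring
  | |- r _ 0%N 2%N 1%N 2%N = _ => by rewrite /= !zRE; ring
  | |- r _ 0%N 2%N 1%N 3%N = _ => by rewrite /= !zRE; ring
  | |- r _ 0%N 2%N 1%N 4%N = _ => by rewrite /= !zRE; ring
  | |- r _ 0%N 2%N 2%N 3%N = _ => by rewrite /= !zRE; ring
  | |- r _ 0%N 2%N 2%N 4%N = _ => by rewrite /= !zRE; ring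
  | |- r _ 0%N 2%N 3%N 4%N = _ => by rewrite /= !zRE; ring
  | |- r _ 0%N 3%N 0%N 3%N = _ => by rewrite /= !zRE; ring
  | |- r _ 0%N 3%N 0%N 4%N = _ => by rewrite /= !zRE; ring
  | |- r _ 0%N 3%N 1%N 2%N = _ => rewrite /= !zRE rBian //; ring
  | |- r _ 0%N 3%N 1%N 3%N = _ => by rewrite /= !zRE; ring
  | |- r _ 0%N 3%N 1%N 4%N = _ => by rewrite /= !zRE; ring
  | |- r _ 0%N 3%N 2%N 3%N = _ => by rewrite /= !zRE; ring
  | |- r _ 0%N 3%N 2%N 4%N = _ => by rewrite /= !zRE; ring
  | |- r _ 0%N 3%N 3%N 4%N = _ => move: (einX (i:=0) (j:=4) erefl erefl erefl); rewrite /= !zRE (r_aa 0 0 4) (rA 1 0 1 4) (rA 2 0 2 4) (rA 3 0 3 4) (r_cc 4 0 4); move=> *; lra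
  | |- r _ 0%N 4%N 0%N 4%N = _ => move: (einK (i:=0) erefl) (einK (i:=1) erefl) (einK (i:=2) erefl) (einK (i:=3) erefl) (einK (i:=4) erefl); rewrite /= !zRE (r_aa 0 0 0) (rA 1 0 1 0) (rB 0 1 1 0) (rA 2 0 2 0) (rB 0 2 2 0) (rA 3 0 3 0) (rB 0 3 3 0) (rA 4 0 4 0) (rB 0 4 4 0) (r_aa 1 1 1) (rA 2 1 2 1) (rB 1 2 2 1) (rA 3 1 3 1) (rB 1 3 3 1) (rA 4 1 4 1) (rB 1 4 4 1) (r_aa 2 2 2) (rA 3 2 3 2) (rB 2 3 3 2) (rA 4 2 4 2) (rB 2 4 4 2) (r_aa 3 3 3) (rA 4 3 4 3) (rB 3 4 4 3) (r_aa 4 4 4); move=> *; lra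
  | |- r _ 0%N 4%N 1%N 2%N = _ => rewrite /= !zRE rBian //; ring
  | |- r _ 0%N 4%N 1%N 3%N = _ => rewrite /= !zRE rBian //; ring
  | |- r _ 0%N 4%N 1%N 4%N = _ => move: (einX (i:=0) (j:=1) erefl erefl erefl); rewrite /= !zRE (r_aa 0 0 1) (r_cc 1 0 1) (rA 2 0 2 1) (rB 0 2 2 1) (rA 3 0 3 1) (rB 0 3 3 1) (rA 4 0 4 1) (rB 0 4 4 1); move=> *; lra
  | |- r _ 0%N 4%N 2%N 3%N = _ => rewrite /= !zRE rBian //; ring
  | |- r _ 0%N 4%N 2%N 4%N = _ => move: (einX (i:=0) (j:=2) erefl erefl erefl); rewrite /= !zRE (r_aa 0 0 2) (rA 1 0 1 2) (r_cc 2 0 2) (rA 3 0 3 2) (rB 0 3 3 2) (rA 4 0 4 2) (rB 0 4 4 2); move=> *; lra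
  | |- r _ 0%N 4%N 3%N 4%N = _ => move: (einX (i:=0) (j:=3) erefl erefl erefl); rewrite /= !zRE (r_aa 0 0 3) (rA 1 0 1 3) (rA 2 0 2 3) (r_cc 3 0 3) (rA 4 0 4 3) (rB 0 4 4 3); move=> *; lra
  | |- r _ 1%N 2%N 1%N 2%N = _ => by rewrite /= !zRE; ring
  | |- r _ 1%N 2%N 1%N 3%N = _ => by rewrite /= !zRE; ring
  | |- r _ 1%N 2%N 1%N 4%N = _ => by rewrite /= !zRE; ring
  | |- r _ 1%N 2%N 2%N 3%N = _ => by rewrite /= !zRE; ring
  | |- r _ 1%N 2%N 2%N 4%N = _ => by rewrite /= !zRE; ring
  | |- r _ 1%N 2%N 3%N 4%N = _ => by rewrite /= !zRE; ring
  | |- r _ 1%N 3%N 1%N 3%N = _ => by rewrite /= !zRE; ring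
  | |- r _ 1%N 3%N 1%N 4%N = _ => by rewrite /= !zRE; ring
  | |- r _ 1%N 3%N 2%N 3%N = _ => by rewrite /= !zRE; ring
  | |- r _ 1%N 3%N 2%N 4%N = _ => by rewrite /= !zRE; ring
  | |- r _ 1%N 3%N 3%N 4%N = _ => move: (einX (i:=1) (j:=4) erefl erefl erefl); rewrite /= !zRE (r_aa 1 1 4) (rA 2 1 2 4) (rA 3 1 3 4) (r_cc 4 1 4); move=> *; lra
  | |- r _ 1%N 4%N 1%N 4%N = _ => move: (einK (i:=0) erefl) (einK (i:=1) erefl) (einK (i:=2) erefl) (einK (i:=3) erefl) (einK (i:=4) erefl); rewrite /= !zRE (r_aa 0 0 0) (rA 1 0 1 0) (rB 0 1 1 0) (rA 2 0 2 0) (rB 0 2 2 0) (rA 3 0 3 0) (rB 0 3 3 0) (rA 4 0 4 0) (rB 0 4 4 0) (r_aa 1 1 1) (rA 2 1 2 1) (rB 1 2 2 1) (rA 3 1 3 1) (rB 1 3 3 1) (rA 4 1 4 1) (rB 1 4 4 1) (r_aa 2 2 2) (rA 3 2 3 2) (rB 2 3 3 2) (rA 4 2 4 2) (rB 2 4 4 2) (r_aa 3 3 3) (rA 4 3 4 3) (rB 3 4 4 3) (r_aa 4 4 4); move=> *; lra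
  | |- r _ 1%N 4%N 2%N 3%N = _ => rewrite /= !zRE rBian //; ring
  | |- r _ 1%N 4%N 2%N 4%N = _ => move: (einX (i:=1) (j:=2) erefl erefl erefl); rewrite /= !zRE (r_aa 1 1 2) (r_cc 2 1 2) (rA 3 1 3 2) (rB 1 3 3 2) (rA 4 1 4 2) (rB 1 4 4 2); move=> *; lra
  | |- r _ 1%N 4%N 3%N 4%N = _ => move: (einX (i:=1) (j:=3) erefl erefl erefl); rewrite /= !zRE (r_aa 1 1 3) (rA 2 1 2 3) (r_cc 3 1 3) (rA 4 1 4 3) (rB 1 4 4 3); move=> *; lra
  | |- r _ 2%N 3%N 2%N 3%N = _ => move: (einK (i:=0) erefl) (einK (i:=1) erefl) (einK (i:=2) erefl) (einK (i:=3) erefl) (einK (i:=4) erefl); rewrite /= !zRE (r_aa 0 0 0) (rA 1 0 1 0) (rB 0 1 1 0) (rA 2 0 2 0) (rB 0 2 2 0) (rA 3 0 3 0) (rB 0 3 3 0) (rA 4 0 4 0) (rB 0 4 4 0) (r_aa 1 1 1) (rA 2 1 2 1) (rB 1 2 2 1) (rA 3 1 3 1) (rB 1 3 3 1) (rA 4 1 4 1) (rB 1 4 4 1) (r_aa 2 2 2) (rA 3 2 3 2) (rB 2 3 3 2) (rA 4 2 4 2) (rB 2 4 4 2) (r_aa 3 3 3) (rA 4 3 4 3) (rB 3 4 4 3) (r_aa 4 4 4); move=> *; lra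
  | |- r _ 2%N 3%N 2%N 4%N = _ => move: (einX (i:=3) (j:=4) erefl erefl erefl); rewrite /= !zRE (r_aa 3 3 4) (r_cc 4 3 4); move=> *; lra
  | |- r _ 2%N 3%N 3%N 4%N = _ => move: (einX (i:=2) (j:=4) erefl erefl erefl); rewrite /= !zRE (r_aa 2 2 4) (rA 3 2 3 4) (r_cc 4 2 4); move=> *; lra
  | |- r _ 2%N 4%N 2%N 4%N = _ => move: (einK (i:=0) erefl) (einK (i:=1) erefl) (einK (i:=2) erefl) (einK (i:=3) erefl) (einK (i:=4) erefl); rewrite /= !zRE (r_aa 0 0 0) (rA 1 0 1 0) (rB 0 1 1 0) (rA 2 0 2 0) (rB 0 2 2 0) (rA 3 0 3 0) (rB 0 3 3 0) (rA 4 0 4 0) (rB 0 4 4 0) (r_aa 1 1 1) (rA 2 1 2 1) (rB 1 2 2 1) (rA 3 1 3 1) (rB 1 3 3 1) (rA 4 1 4 1) (rB 1 4 4 1) (r_aa 2 2 2) (rA 3 2 3 2) (rB 2 3 3 2) (rA 4 2 4 2) (rB 2 4 4 2) (r_aa 3 3 3) (rA 4 3 4 3) (rB 3 4 4 3) (r_aa 4 4 4); move=> *; lra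
  | |- r _ 2%N 4%N 3%N 4%N = _ => move: (einX (i:=2) (j:=3) erefl erefl erefl); rewrite /= !zRE (r_aa 2 2 3) (r_cc 3 2 3) (rA 4 2 4 3) (rB 2 4 4 3); move=> *; lra
  | |- r _ 3%N 4%N 3%N 4%N = _ => move: (einK (i:=0) erefl) (einK (i:=1) erefl) (einK (i:=2) erefl) (einK (i:=3) erefl) (einK (i:=4) erefl); rewrite /= !zRE (r_aa 0 0 0) (rA 1 0 1 0) (rB 0 1 1 0) (rA 2 0 2 0) (rB 0 2 2 0) (rA 3 0 3 0) (rB 0 3 3 0) (rA 4 0 4 0) (rB 0 4 4 0) (r_aa 1 1 1) (rA 2 1 2 1) (rB 1 2 2 1) (rA 3 1 3 1) (rB 1 3 3 1) (rA 4 1 4 1) (rB 1 4 4 1) (r_aa 2 2 2) (rA 3 2 3 2) (rB 2 3 3 2) (rA 4 2 4 2) (rB 2 4 4 2) (r_aa 3 3 3) (rA 4 3 4 3) (rB 3 4 4 3) (r_aa 4 4 4); move=> *; lra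
  end.

Lemma L3 a b c d : (a < b)%N -> (c < d)%N -> ((a < c)%N || (a == c)%N && (b <= d)%N) ->
  (b < 5)%N -> (d < 5)%N -> r Rm a b c d = evalL (atv (r Rm) (tt Rm)) (T3s a b c d).
Proof.
move: a b c d; do 4 (case=> [|[|[|[|[|?]]]]]); try by [].
all: move=> _ _ _ _ _; dispatch.
Qed.
End S.

Lemma natLebE a b : Nat.leb a b = (a <= b)%N.
Proof. by apply/idP/idP => [/Nat.leb_le/ssrnat.leP|/ssrnat.leP/Nat.leb_le]. Qed.
Lemma natLtbE a b : Nat.ltb a b = (a < b)%N.
Proof. exact: natLebE. Qed.
Lemma natEqbE a b : Nat.eqb a b = (a == b)%N.
Proof. by apply/idP/idP => [/Nat.eqb_eq -> //| /eqP ->]; exact: Nat.eqb_refl. Qed.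

Section S2.
Variable (R : realFieldType) (Rm : curv R 5) (hR : is_curvature_tensor Rm) (hE : is_einstein Rm).
Lemma L2 a b c d : (a < b)%N -> (c < d)%N -> (b < 5)%N -> (d < 5)%N ->
  r Rm a b c d = evalL (atv (r Rm) (tt Rm)) (T2s a b c d).
Proof.
move=> hab hcd hb hd; rewrite /T2s natLtbE natEqbE natLebE; case: ifP => h.
  exact: L3.
rewrite (rS hR); apply: L3 => //.
move/negbT: h => h; apply/orP; lia.
Qed.

Lemma L1 a b c d : (a < 5)%N -> (b < 5)%N -> (c < 5)%N -> (d < 5)%N ->
  r Rm a b c d = evalL (atv (r Rm) (tt Rm)) (T1s a b c d).
Proof.
move=> ha hb hc hd; rewrite /T1s !natEqbE !natLtbE.
case: eqP => [->|hab]; first by rewrite (r_aa hR).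
case: eqP => [->|hcd]; first by rewrite (r_cc hR).
case: ltngtP hab => // hab _; case: ltngtP hcd => // hcd _ /=.
- exact: L2.
- by rewrite (rB hR) evalL_neg -L2.
- by rewrite (rA hR) evalL_neg -L2.
- by rewrite (rA hR) (rB hR) opprK -L2.
Qed.

Lemma HRm (a b c d : 'I_5) : Rm a b c d = evalL (atv (r Rm) (tt Rm)) (T1s a b c d).
Proof. by rewrite -L1 // /r !ord5_val. Qed.
End S2.

Definition mono := (nat * nat * nat)%type.
Definition cpoly := seq (Z * mono).

Section Ev.
Variable (R : realFieldType) (v : nat -> R).
Definition evalM (m : mono) : R := v m.1.1 * v m.1.2 * v m.2.
Definition evalP (P : cpoly) : R := \sum_(p <- P) zR p.1 * evalM p.2.

Lemma evalLE l : evalL v l = \sum_(p <- l) zR p.1 * v p.2.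
Proof. by elim: l => [|p l IH]; rewrite ?big_nil ?big_cons //= IH. Qed.

Lemma evalP_cat P Q : evalP (P ++ Q) = evalP P + evalP Q.
Proof. by rewrite /evalP big_cat. Qed.

Lemma evalP_fm (T : Type) (f : T -> cpoly) s :
  evalP (flatten (map f s)) = \sum_(x <- s) evalP (f x).
Proof.
elim: s => [|x s IH]; first by rewrite big_nil /evalP big_nil.
by rewrite /= evalP_cat IH big_cons.
Qed.

Definition sort2 (i j : nat) : nat * nat := if Nat.leb i j then (i, j) else (j, i).
Definition sort3 (i j k : nat) : mono :=
  let (a, b) := sort2 i j in
  if Nat.leb b k then (a, b, k) else if Nat.leb a k then (a, k, b) else (k, a, b).

Lemma sort3E i j k : evalM (sort3 i j k) = v i * v j * v k.
Proof.
rewrite /sort3 /sort2; case: (Nat.leb i j) => /=; repeat (case: ifP => _); rewrite /evalM /=; ring.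
Qed.

Definition mul3 (l1 l2 l3 : lin) : cpoly :=
  flatten (map (fun p1 => flatten (map (fun p2 => map (fun p3 =>
    (Z.mul (Z.mul p1.1 p2.1) p3.1, sort3 p1.2 p2.2 p3.2)) l3) l2)) l1).

Lemma mul3E l1 l2 l3 : evalP (mul3 l1 l2 l3) = evalL v l1 * evalL v l2 * evalL v l3.
Proof.
rewrite /mul3 evalP_fm !evalLE -mulrA big_distrl /=; apply: eq_bigr => p1 _.
rewrite evalP_fm big_distrl /= big_distrr /=; apply: eq_bigr => p2 _.
rewrite /evalP big_map !big_distrr /=; apply: eq_bigr => p3 _.
rewrite sort3E !zRM; ring.
Qed.

Definition scaleP (c : Z) (P : cpoly) : cpoly := map (fun p => (Z.mul c p.1, p.2)) P.
Lemma scalePE c P : evalP (scaleP c P) = zR c * evalP P.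
Proof.
rewrite /evalP big_map big_distrr /=; apply: eq_bigr => p _; rewrite zRM; ring.
Qed.

Definition mono_eqb (m n : mono) : bool :=
  Nat.eqb m.1.1 n.1.1 && Nat.eqb m.1.2 n.1.2 && Nat.eqb m.2 n.2.
Definition mono_le (m n : mono) : bool :=
  Nat.ltb m.1.1 n.1.1 || (Nat.eqb m.1.1 n.1.1 &&
   (Nat.ltb m.1.2 n.1.2 || (Nat.eqb m.1.2 n.1.2 && Nat.leb m.2 n.2))).

Fixpoint merge_acc (cur : Z * mono) (P : cpoly) : cpoly :=
  match P with
  | [::] => [:: cur]
  | q :: P' => if mono_eqb cur.2 q.2 then merge_acc (Z.add cur.1 q.1, cur.2) P'
               else cur :: merge_acc q P'
  end.

Lemma mono_eqbP m n : mono_eqb m n -> m = n.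
Proof.
case: m => [[a b] c]; case: n => [[a' b'] c']; rewrite /mono_eqb !natEqbE /=.
by case/andP => /andP [/eqP -> /eqP ->] /eqP ->.
Qed.

Lemma evalP_cons p P : evalP (p :: P) = zR p.1 * evalM p.2 + evalP P.
Proof. by rewrite /evalP big_cons. Qed.

Lemma merge_accE cur P : evalP (merge_acc cur P) = zR cur.1 * evalM cur.2 + evalP P.
Proof.
elim: P cur => [|q P IH] cur /=; first by rewrite /evalP big_cons big_nil.
case: ifP => h.
  rewrite IH /= zRD (mono_eqbP h) evalP_cons; ring.
by rewrite !evalP_cons IH.
Qed.

Definition normP (P : cpoly) : cpoly :=
  match sort (fun p q => mono_le p.2 q.2) P with
  | [::] => [::]
  | p :: P' => merge_acc p P'
  end.

Lemma normPE P : evalP (normP P) = evalP P.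
Proof.
rewrite /normP.
have hp := permEl (perm_sort (fun p q : Z * mono => mono_le p.2 q.2) P).
rewrite -[RHS](perm_big _ hp) -/(evalP _).
case: (sort _ _) => [|p P'] //; by rewrite merge_accE evalP_cons.
Qed.

Definition checkP (P : cpoly) : bool := all (fun p => Z.eqb p.1 Z0) (normP P).

Lemma checkPE P : checkP P -> evalP P = 0.
Proof.
rewrite /checkP -normPE /evalP => /allP h.
rewrite big_seq big1 // => p /h /Z.eqb_eq ->; by rewrite zR0 mul0r.
Qed.
End Ev.

Definition I5 := iota 0 5.
Definition fm (T : Type) (f : T -> cpoly) (s : seq T) : cpoly := flatten (map f s).
Definition L (a b c d : nat) : lin := T1s (ord5 a) (ord5 b) (ord5 c) (ord5 d).
Definition tL : lin := [:: ((1:Z), 0%N)].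

Definition normsqP : cpoly := fm (fun a => fm (fun b => fm (fun c => fm (fun d =>
  mul3 tL (L a b c d) (L a b c d)) I5) I5) I5) I5.
Definition RRP (i j : nat) : cpoly := fm (fun a => fm (fun b => fm (fun c =>
  mul3 tL (T1s i (ord5 a) (ord5 b) (ord5 c)) (T1s j (ord5 a) (ord5 b) (ord5 c))) I5) I5) I5.
Definition RcheckP (i j : nat) : cpoly := fm (fun u => fm (fun w => fm (fun a => fm (fun b => fm (fun c =>
  mul3 (T1s i (ord5 u) (ord5 w) j) (L a b c u) (L a b c w)) I5) I5) I5) I5) I5.
Definition RhatP (i j : nat) : cpoly := fm (fun a => fm (fun b => fm (fun c => fm (fun u => fm (fun w =>
  mul3 (T1s i (ord5 b) (ord5 a) (ord5 c)) (T1s j (ord5 b) (ord5 u) (ord5 w)) (L a c u w)) I5) I5) I5) I5) I5.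
Definition RringP (i j : nat) : cpoly := fm (fun a => fm (fun b => fm (fun c => fm (fun u => fm (fun w =>
  mul3 (T1s i (ord5 a) (ord5 b) (ord5 c)) (T1s j (ord5 u) (ord5 b) (ord5 w)) (L a u c w)) I5) I5) I5) I5) I5.
Definition gZ (i j : nat) : Z := if Nat.eqb i j then (1:Z) else Z0.
Definition LHSP (i j : nat) : cpoly :=
  scaleP (Z.mul (-40:Z) (gZ i j)) [:: ((1:Z), (0, 0, 0)%N)] ++ scaleP (Z.mul (-2:Z) (gZ i j)) normsqP
  ++ scaleP (20:Z) (RRP i j) ++ scaleP (-4:Z) (RcheckP i j) ++ scaleP (-4:Z) (RhatP i j)
  ++ scaleP (8:Z) (RringP i j).

Lemma chk : all (fun i => all (fun j => checkP (LHSP i j)) I5) I5.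
Proof. vm_compute. reflexivity. Qed.

Lemma eq_sum5n (R : realFieldType) (f g : nat -> R) : (forall k, f k = g k) -> sum5n f = sum5n g.
Proof. by move=> h; rewrite /sum5n !h. Qed.
Lemma sum5nE (R : realFieldType) (f : nat -> R) : sum5n f = \sum_(k <- I5) f k.
Proof. by rewrite /sum5n /I5 /= !big_cons big_nil addr0 !addrA. Qed.

Section Q.
Variable (R : realFieldType) (F : curv R 5).
Lemma normsqE : normsq F = sum5n (fun a => sum5n (fun b => sum5n (fun c => sum5n (fun d =>
  F (ord5 a) (ord5 b) (ord5 c) (ord5 d) * F (ord5 a) (ord5 b) (ord5 c) (ord5 d))))).
Proof. rewrite /normsq; do 4 (rewrite sumE; apply: eq_sum5n => ?); by []. Qed.
Lemma RRE i j : RR F i j = sum5n (fun a => sum5n (fun b => sum5n (fun c =>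
  F i (ord5 a) (ord5 b) (ord5 c) * F j (ord5 a) (ord5 b) (ord5 c)))).
Proof. rewrite /RR; do 3 (rewrite sumE; apply: eq_sum5n => ?); by []. Qed.
Lemma RcheckE i j : Rcheck F i j = sum5n (fun u => sum5n (fun v => sum5n (fun a => sum5n (fun b => sum5n (fun c =>
  F i (ord5 u) (ord5 v) j * F (ord5 a) (ord5 b) (ord5 c) (ord5 u) * F (ord5 a) (ord5 b) (ord5 c) (ord5 v)))))).
Proof. rewrite /Rcheck; do 5 (rewrite sumE; apply: eq_sum5n => ?); by []. Qed.
Lemma RhatE i j : Rhat F i j = sum5n (fun a => sum5n (fun b => sum5n (fun c => sum5n (fun u => sum5n (fun v =>
  F i (ord5 b) (ord5 a) (ord5 c) * F j (ord5 b) (ord5 u) (ord5 v) * F (ord5 a) (ord5 c) (ord5 u) (ord5 v)))))).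
Proof. rewrite /Rhat; do 5 (rewrite sumE; apply: eq_sum5n => ?); by []. Qed.
Lemma RringE i j : Rring F i j = sum5n (fun a => sum5n (fun b => sum5n (fun c => sum5n (fun u => sum5n (fun v =>
  F i (ord5 a) (ord5 b) (ord5 c) * F j (ord5 u) (ord5 b) (ord5 v) * F (ord5 a) (ord5 u) (ord5 c) (ord5 v)))))).
Proof. rewrite /Rring; do 5 (rewrite sumE; apply: eq_sum5n => ?); by []. Qed.
End Q.

Section G.
Variable (R : realFieldType) (X : nat -> nat -> nat -> nat -> R) (t : R).
Let v := atv X t.
Let F : curv R 5 := fun a b c d => evalL v (T1s a b c d).

Lemma tLE : evalL v tL = t.
Proof. by rewrite /tL /= zR1 mul1r addr0. Qed.

Lemma normsqPE : evalP v normsqP = t * normsq F.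
Proof.
rewrite normsqE /normsqP /fm.
rewrite sum5nE evalP_fm mulr_sumr; apply: eq_bigr => ? _.
rewrite sum5nE evalP_fm mulr_sumr; apply: eq_bigr => ? _.
rewrite sum5nE evalP_fm mulr_sumr; apply: eq_bigr => ? _.
rewrite sum5nE evalP_fm mulr_sumr; apply: eq_bigr => ? _.
by rewrite mul3E tLE mulrA.
Qed.

Lemma RRPE (i j : 'I_5) : evalP v (RRP i j) = t * RR F i j.
Proof.
rewrite RRE /RRP /fm.
rewrite sum5nE evalP_fm mulr_sumr; apply: eq_bigr => ? _.
rewrite sum5nE evalP_fm mulr_sumr; apply: eq_bigr => ? _.
rewrite sum5nE evalP_fm mulr_sumr; apply: eq_bigr => ? _.
by rewrite mul3E tLE mulrA.
Qed.

Lemma RcheckPE (i j : 'I_5) : evalP v (RcheckP i j) = Rcheck F i j.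
Proof.
rewrite RcheckE /RcheckP /fm.
do 5 (rewrite sum5nE evalP_fm; apply: eq_bigr => ? _).
by rewrite mul3E.
Qed.
Lemma RhatPE (i j : 'I_5) : evalP v (RhatP i j) = Rhat F i j.
Proof.
rewrite RhatE /RhatP /fm.
do 5 (rewrite sum5nE evalP_fm; apply: eq_bigr => ? _).
by rewrite mul3E.
Qed.
Lemma RringPE (i j : 'I_5) : evalP v (RringP i j) = Rring F i j.
Proof.
rewrite RringE /RringP /fm.
do 5 (rewrite sum5nE evalP_fm; apply: eq_bigr => ? _).
by rewrite mul3E.
Qed.

Lemma gZE (i j : 'I_5) : zR (gZ i j) = gmet R i j.
Proof. by rewrite /gZ /gmet natEqbE -val_eqE; case: (val i == val j). Qed.

Lemma core_eq (i j : 'I_5) :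
  (- 40%:R * t ^+ 3 + - 2%:R * t * normsq F) * gmet R i j
  + 20%:R * t * RR F i j - 4%:R * Rcheck F i j - 4%:R * Rhat F i j
  + 8%:R * Rring F i j = 0.
Proof.
have := checkPE v (allP (allP chk i _) j _).
rewrite /I5 !mem_iota !add0n !ltn_ord => /(_ isT isT).
rewrite /LHSP !evalP_cat !scalePE normsqPE RRPE RcheckPE RhatPE RringPE !zRM gZE.
rewrite evalP_cons /evalP big_nil /evalM /= zR1.
have -> : zR (-40:Z) = - 40%:R :> R by [].
have -> : zR (-2:Z) = - 2%:R :> R by [].
have -> : zR (-4:Z) = - 4%:R :> R by [].
have -> : zR (20:Z) = 20%:R :> R by [].
have -> : zR (8:Z) = 8%:R :> R by [].
move=> <-; ring.
Qed.
End G.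

Unset Implicit Arguments.
Theorem corollary4p2 (R : realFieldType) (Rm : curv R 5)
    (hR : is_curvature_tensor Rm) (hE : is_einstein Rm) (i j : 'I_5) :
  (scal Rm ^+ 3 / 25%:R + scal Rm / 5%:R * normsq Rm) * gmet R i j
  - 2%:R * scal Rm * RR Rm i j - 4%:R * Rcheck Rm i j - 4%:R * Rhat Rm i j
  + 8%:R * Rring Rm i j = 0.
Proof.
have hs : scal Rm = - 10%:R * tt Rm.
  by rewrite /tt; field.
have HF : (fun a b c d : 'I_5 => evalL (atv (r Rm) (tt Rm)) (T1s a b c d)) = Rm.
  apply: functional_extensionality => a; apply: functional_extensionality => b.
  apply: functional_extensionality => c; apply: functional_extensionality => d.
  by rewrite (HRm hR hE).
have := core_eq (r Rm) (tt Rm) i j; rewrite HF => H.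
by apply: etrans H; rewrite hs; field.
Qed.
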